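(* Let $q$ be a prime power, let $\lambda \in \mathbb{F}_{q^n}\setminus\mathbb{F}_q$, $t = [\mathbb{F}_q(\lambda):\mathbb{F}_q]$, let $\overline{S}$ be an $\mathbb{F}_{q^t}$-subspace of $\mathbb{F}_{q^n}$ of $\mathbb{F}_{q^t}$-dimension $l>0$, $b \in \mathbb{F}_{q^n}^*$ with $\mathbb{F}_{q^t}\cap b\overline{S}=\{0\}$, $0<m<t$, $k = tl+m$ with $t+1 \le k \le n$, and $S = \overline{S} \oplus b\langle 1, \lambda, \ldots, \lambda^{m-1}\rangle_{\mathbb{F}_q}$, with $Y=\langle S\rangle_{\mathbb{F}_{q^t}} = \mathbb{F}_{q^n}$, $2m \ge t-1$ and $r = 2m+t(l-1)$. If $\mathcal{C}=\mathrm{Orb}(S)$ is an $r$-FWS code and $\mu \in \mathbb{F}_{q^n}^*$ with $\mu \notin H(\overline{S})$, then $\dim_{\mathbb{F}_q}(S \cap \mu S) = t(l-1)+2m$.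
   Context: $\mathrm{Orb}(S)=\{\alpha S:\alpha\in\mathbb{F}_{q^n}^*\}$. For an $\mathbb{F}_q$-subspace $V$ of $\mathbb{F}_{q^n}$, $H(V) = \{x \in \mathbb{F}_{q^n}^* : xV = V\} \cup \{0\}$. With $d(U,V)=2k-2\dim_{\mathbb{F}_q}(U\cap V)$ and $\omega_{2i}(\mathcal{C})=|\{\alpha S: \alpha\in\mathbb{F}_{q^n}^*, d(S,\alpha S)=2i\}|$ for $i=1,\dots,k$, $\mathcal{C}$ is an $r$-FWS code if $\omega_{2i}=0$ for $i=k-r+1,\ldots,k$ and $\omega_{2i}\neq 0$ for all $i=1,\ldots,k-r$. $\langle S\rangle_{\mathbb{F}_{q^t}}$ denotes the $\mathbb{F}_{q^t}$-span of $S$. *)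

(* Defs.v *)
From HB Require Import structures.
From mathcomp Require Import all_boot all_order all_algebra all_field.
Set Implicit Arguments. Unset Strict Implicit. Unset Printing Implicit Defensive.
Import GRing.Theory.
Local Open Scope ring_scope.
Local Open Scope vspace_scope.

(* Setting: F = F_q a finite field, L = F_{q^n} a finite extension of F
   (a fieldExtType over F, so L is finite since F is); an F_q-subspace of
   F_{q^n} is an element of {vspace L}. *)

Section Defs.
Variables (F : finFieldType) (L : fieldExtType F).

Definition smul (a : L) (V : {vspace L}) : {vspace L} := (<[a]> * V)%VS.

Definition Hstab (V : {vspace L}) : pred L :=
  fun x => (x == 0%R) || (smul x V == V).

Definition sdist (U V : {vspace L}) : nat :=
  (2 * \dim U - 2 * \dim (U :&: V))%N.

(* omega_{2i}(Orb S) = |{alpha S : alpha in L^*, d(S, alpha S) = 2i}|,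
   counted as the number of distinct subspaces alpha S *)
Definition omega (S : {vspace L}) (i : nat) : nat :=
  size (undup [seq smul (a : L) S | a <- enum (finvect_type L)
                 & (a != 0%R) && (sdist S (smul (a : L) S) == 2 * i)%N]).

Definition is_FWS (S : {vspace L}) (r : nat) : Prop :=
  (forall i, (\dim S - r + 1 <= i <= \dim S)%N -> omega S i = 0%N) /\
  (forall i, (1 <= i <= \dim S - r)%N -> omega S i <> 0%N).

Definition powspan (lam : L) (m : nat) : {vspace L} :=
  <<[seq (lam ^+ j)%R | j <- iota 0 m]>>%VS.

End Defs.

(* Main.v *)
Require Import Defs.
From HB Require Import structures.
From mathcomp Require Import all_boot all_order all_algebra all_field.
From mathcomp Require Import zify.
Import GRing.Theory.
Local Open Scope ring_scope.
Local Open Scope vspace_scope.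
Section S.
Variables (F : finFieldType) (L : fieldExtType F).
Lemma spanE (f : nat -> L) a b :
  <<[seq f i | i <- index_iota a b]>> = (\sum_(a <= i < b) <[f i]>)%VS.
Proof. by rewrite span_def big_map. Qed.

Lemma dimP (lam : L) m : (m <= \dim <<1%VS; lam>>)%N -> \dim (powspan lam m) = m.
Proof.
move=> hm.
have dF := dim_Fadjoin (1%AS : {subfield L}) lam.
have es := Fadjoin_eq_sum (1%AS : {subfield L}) lam.
rewrite /= dimv1 muln1 in dF.
rewrite /Fadjoin_sum in es.
set n := adjoin_degree _ _ in dF es.
have {}es : <<1%VS; lam>> = (\sum_(0 <= i < n) <[lam ^+ i]>)%VS.
  by rewrite es big_mkord; apply: eq_bigr => i _; rewrite prod1v.
rewrite dF in hm.
rewrite (@big_cat_nat _ _ _ m 0 n _ _ (leq0n m) hm) /= in es.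
have := dimv_add_leqif (\sum_(0 <= i < m) <[lam ^+ i]>)%VS (\sum_(m <= i < n) <[lam ^+ i]>)%VS.
move=> [h _].
rewrite -es dF -!spanE in h.
have := dim_span [seq (lam ^+ i)%R | i <- index_iota m n].
rewrite size_map size_iota => h2.
have := dim_span [seq (lam ^+ i)%R | i <- index_iota 0 m].
rewrite size_map size_iota subn0 => h3.
rewrite /powspan.
have -> : iota 0 m = index_iota 0 m by rewrite /index_iota subn0.
apply/eqP; rewrite eqn_leq h3 /=.
rewrite -(leq_add2r (n - m)) subnKC //. exact: (leq_trans h (leq_add (leqnn _) h2)).
Qed.
End S.

Theorem theorem4p9 (F : finFieldType) (L : fieldExtType F)
    (lam : L) (Sbar : {vspace L}) (b mu : L) (l m : nat) :
  let n := \dim {:L} in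
  let Fqt := <<1%VS; lam>>%VS in   (* F_q(lambda) = F_{q^t} *)
  let t := \dim Fqt in
  let k := (t * l + m)%N in
  let S := (Sbar + smul b (powspan lam m))%VS in
  let r := (2 * m + t * (l - 1))%N in
  lam \notin 1%VS ->
  (Fqt * Sbar <= Sbar)%VS ->        (* Sbar is an F_{q^t}-subspace *)
  \dim Sbar = (t * l)%N ->          (* of F_{q^t}-dimension l *)
  (0 < l)%N ->
  b != 0%R ->
  (Fqt :&: smul b Sbar = 0)%VS ->
  (0 < m < t)%N ->
  (t + 1 <= k <= n)%N ->
  directv (Sbar + smul b (powspan lam m)) ->   (* the sum defining S is direct *)
  (Fqt * S)%VS = fullv ->           (* <S>_{F_{q^t}} = F_{q^n} *)
  (t - 1 <= 2 * m)%N ->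
  is_FWS S r ->
  mu != 0%R ->
  ~~ Hstab Sbar mu ->
  \dim (S :&: smul mu S) = (t * (l - 1) + 2 * m)%N.
Proof.
move=> n Fqt t k S r hlam hFS dSbar hl hb hcap /andP[m0 hmt] htk hdir hY ht hFWS hmu hH.
have dP : \dim (powspan lam m) = m by apply: dimP; apply: ltnW.
have dsm (a : L) (V : {vspace L}) : a != 0%R -> \dim (smul a V) = \dim V.
  by move=> ha; rewrite /smul prodvC dim_cosetv.
have dS : \dim S = (t * l + m)%N.
  have := dimv_sum_cap Sbar (smul b (powspan lam m)).
  by rewrite (directv_addP hdir) dimv0 addn0 dsm // dP dSbar.
have hd := dimv_sum_cap S (smul mu S).
rewrite dsm // in hd.
set M := (Sbar + smul mu Sbar)%VS.
have hMS : (M <= S + smul mu S)%VS.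
  by apply: addvS; [apply: addvSl | apply: prodvSr; apply: addvSl].
have hFM : (Fqt * M <= M)%VS.
  rewrite /M prodvDr; apply: addvS => //.
  by rewrite /smul prodvCA; apply: prodvSr.
have tdM := field_module_dimS hFM.
have ltM : (\dim Sbar < \dim M)%N.
  rewrite ltnNge; apply/negP => hle.
  have eM : Sbar == M by rewrite eqEdim addvSl.
  have hs : (smul mu Sbar <= Sbar)%VS by rewrite [X in (_ <= X)%VS](eqP eM) addvSr.
  have : smul mu Sbar == Sbar.
    by rewrite eqEdim hs /= dsm.
  by move: hH; rewrite /Hstab /= => /norP[_ /negP].
have geM : (t * l + t <= \dim M)%N.
  case/dvdnP: tdM => c hc; have -> : (t * l + t = t * l.+1)%N by rewrite mulnS addnC.
  have hc' : \dim M = (t * c)%N by rewrite hc mulnC.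
  rewrite hc' leq_pmul2l.
    by move: ltM; rewrite dSbar hc' ltn_pmul2l //; apply: leq_ltn_trans hmt.
  by apply: leq_ltn_trans hmt.
have := dimvS hMS => hge.
have e1 : (t * (l - 1) = t * l - t)%N by rewrite mulnBr muln1.
have tl_ge : (t <= t * l)%N by rewrite leq_pmulr.
rewrite e1; rewrite /r e1 in hFWS.
rewrite dS in hd hFWS.
move: hd hge geM tl_ge hmt; set d := \dim (S :&: _); set e := \dim (_ + _); set tl := (t * l)%N.
move=> hd hge geM tl_ge hmt.
apply/eqP; rewrite eqn_leq; apply/andP; split; first lia.
rewrite leqNgt; apply/negP => hlt.
case: hFWS => h1 _.
have := h1 (tl + m - d)%N; rewrite dS.
have -> : (tl + m - (2 * m + (tl - t)) + 1 <= tl + m - d <= tl + m)%N.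
  apply/andP; split; lia.
move=> /(_ isT); rewrite /omega.
set s := undup _.
have : smul mu S \in s.
  rewrite mem_undup; apply/mapP; exists (mu : finvect_type L) => //.
  rewrite mem_filter hmu /=; apply/andP; split; last first.
    have := @mem_enum (finvect_type L) (finvect_type L) mu. rewrite inE => h; exact: h.
  rewrite /sdist dS -/d.
  apply/eqP; lia.
by case: s.
Qed.
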